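(* Let $(Y,\leq)$ be a partial order with $|Y|=\omega_1$. Then there is a cofinal subset $X\subseteq Y$ such that $(X,\leq)$ is well-founded and, for every $x\in X$, the set $(-\infty,x)_X=\{z\in X: z<x\}$ is countable.
   Context: A subset $X\subseteq Y$ is cofinal if for every $y\in Y$ there is $x\in X$ with $y\leq x$. *)

(* Defs.v *)
From HB Require Import structures.
From mathcomp Require Import all_boot all_order.
From mathcomp Require Import boolp classical_sets functions cardinality.
Set Implicit Arguments. Unset Strict Implicit. Unset Printing Implicit Defensive.
Import Order.TTheory.
Local Open Scope classical_set_scope.

(* A type Y has cardinality omega_1 iff it carries a well-order of order type
   omega_1: a strict total well-founded order all of whose proper initial
   segments are countable, while Y itself is uncountable. *)
Definition card_omega1 (Y : Type) : Prop :=
  exists lt : Y -> Y -> Prop,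
    (forall y, ~ lt y y) /\
    (forall x y z, lt x y -> lt y z -> lt x z) /\
    (forall x y, lt x y \/ x = y \/ lt y x) /\
    well_founded lt /\
    (forall y, countable [set z | lt z y]) /\
    ~ countable [set: Y].

Definition cofinal d (Y : porderType d) (X : set Y) : Prop :=
  forall y : Y, exists2 x, X x & (y <= x)%O.

Definition wf_on d (Y : porderType d) (X : set Y) : Prop :=
  forall A : set Y, A `<=` X -> A !=set0 ->
    exists2 m, A m & forall z, A z -> ~ (z < m)%O.

(* Main.v *)
Require Import Defs.
From HB Require Import structures.
From mathcomp Require Import all_boot all_order.
From mathcomp Require Import boolp classical_sets functions cardinality.
Local Open Scope classical_set_scope.

Lemma wf_min (Y : Type) (lt : Y -> Y -> Prop) (wf : well_founded lt) (P : Y -> Prop) (y : Y) :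
  P y -> exists m, P m /\ forall z, lt z m -> ~ P z.
Proof.
move=> Py; have [//|H] := pselect (exists m, P m /\ forall z, lt z m -> ~ P z).
exfalso.
have : forall x, ~ P x.
  apply: (well_founded_ind wf (fun x => ~ P x)) => x IH Px; apply: H; exists x; split => // z hz Pz.
by move/(_ y).
Qed.

Theorem mainTheorem1 (d : Order.disp_t) (Y : porderType d) (hY : card_omega1 Y) :
  exists X : set Y,
    cofinal X /\ wf_on X /\
    (forall x, X x -> countable [set z | X z /\ (z < x)%O]).
Proof.
case: hY => lt [irr [tr [tot [wf [cnt _]]]]].
pose X := [set y : Y | forall z, lt z y -> ~ (y <= z)%O].
have key : forall x z, X x -> X z -> (z < x)%O -> lt z x.
  move=> x z Xx Xz zx.
  case: (tot z x) => [//|[ezx|lxz]].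
    by rewrite ezx Order.POrderTheory.ltxx in zx.
  by exfalso; apply: (Xz x lxz); apply: Order.POrderTheory.ltW.
exists X; split; [|split].
- move=> y.
  have [m [ym mmin]] := @wf_min _ _ wf (fun x => (y <= x)%O) _ (Order.POrderTheory.lexx y).
  exists m => //= z lzm mz; apply: (mmin z lzm).
  exact: Order.POrderTheory.le_trans ym mz.
- move=> A AX [a Aa].
  have [m [Am mmin]] := @wf_min _ _ wf A _ Aa.
  exists m => // z Az zm; apply: (mmin z _ Az).
  exact: key (AX _ Am) (AX _ Az) zm.
- move=> x Xx; apply: sub_countable (cnt x).
  apply: subset_card_le => z [Xz zx] /=; exact: key Xx Xz zx.
Qed.
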